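(* Let $V$ be a real Hilbert space, $V_{\mathcal T}\subset V$ a finite-dimensional subspace, and let $a,a_\delta:V\times V\to\mathbb R$, $a_{\mathcal T}:V_{\mathcal T}\times V_{\mathcal T}\to\mathbb R$, $f\in V^*$, $f_{\mathcal T}$ a linear functional on $V_{\mathcal T}$, and $j:V\to\mathbb R$ be as described in the context. Let $u,z\in V$ satisfy $$a(u;v)+a_\delta(u;v)=\langle f,v\rangle\quad\forall v\in V,$$ $$a'(u;w,z)+a_\delta'(u;w,z)=j'(u;w)\quad\forall w\in V.$$ Let $u_{\mathcal T m},z_{\mathcal T m}\in V_{\mathcal T}$ satisfy $$a_{\mathcal T}(u_{\mathcal T m};v)=\langle f_{\mathcal T},v\rangle\quad\forall v\in V_{\mathcal T},$$ $$a'(u_{\mathcal T m};w,z_{\mathcal T m})=j'(u_{\mathcal T m};w)\quad\forall w\in V_{\mathcal T}.$$ Let $i_{\mathcal T}:V\to V_{\mathcal T}$ be any map (an interpolation operator). Put $$e=(e_u,e_z):=(u-u_{\mathcal T m},\,z-z_{\mathcal T m}),\qquad x:=(u,z),\qquad x_{\mathcal T m}:=(u_{\mathcal T m},z_{\mathcal T m}).$$ Assume the differentiability hypotheses stated in the context. Then $$\begin{aligned} j(u)-j(u_{\mathcal T m}) ={}& -a_\delta(u_{\mathcal T m};z_{\mathcal T m})\\ &+\langle f,z_{\mathcal T m}\rangle-\langle f_{\mathcal T},z_{\mathcal T m}\rangle-a(u_{\mathcal T m};z_{\mathcal T m})+a_{\mathcal T}(u_{\mathcal T m};z_{\mathcal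 T m})\\ &+\tfrac12\big[\varrho(u_{\mathcal T m};z-i_{\mathcal T}z)+\varrho^*(u_{\mathcal T m};z_{\mathcal T m},u-i_{\mathcal T}u)\big]\\ &-\tfrac12\big[a_\delta(u_{\mathcal T m};e_z)+a_\delta'(u_{\mathcal T m};e_u,z_{\mathcal T m})\big]\\ &-\tfrac12\varrho(u_{\mathcal T m};z_{\mathcal T m}-i_{\mathcal T}z)-\tfrac12 R, \end{aligned}$$ where $$R:=\int_0^1\sigma(1-\sigma)\,L'''(x_{\mathcal T m}+\sigma e;e,e,e)\,d\sigma .$$
   Context: Setting and data: - $V$ is a real Hilbert space, $V_{\mathcal T}\subset V$ is a finite-dimensional subspace, and $X:=V\times V$. - $a,a_\delta:V\times V\to\mathbb R$ are linear in the second argument and possibly nonlinear in the first. The value $a(w;v)$ denotes $a$ evaluated at $(w,v)$, and similarly for $a_\delta$. - $f\in V^*$, with $\langle f,v\rangle$ its value at $v$. - $j:V\to\mathbb R$ is an output functional. - $a_{\mathcal T}:V_{\mathcal T}\times V_{\mathcal T}\to\mathbb R$ is linear in the second argument. It need not equal the restriction of $a$. - $f_{\mathcal T}$ is a linear functional on $V_{\mathcal T}$. It need not equal the restriction of $f$. Derivatives: - $a'(u;w,v):=\lim_{\epsilon\to0}\epsilon^{-1}[a(u+\epsilon w;v)-a(u;v)]$ denotes the Gâteaux (directional) derivative in the first argument. It is assumed to exist and be linear in $w$ and $v$. - $a_\delta'$ and $j'(u;w)$ are defined analogously and satisfy the same assumptions. The functional $L$: on $X$ define $$L(x):=j(u)+\langle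 f,z\rangle-a(u;z)-a_\delta(u;z),\qquad x=(u,z).$$ Its directional derivative at $x$ in direction $y=(w,v)\in X$ is $$L'(x;y)=j'(u;w)-a'(u;w,z)-a_\delta'(u;w,z)+\langle f,v\rangle-a(u;v)-a_\delta(u;v).$$ Residuals: for $v,w\in V$, $$\varrho(u_{\mathcal T m};v):=\langle f,v\rangle-a(u_{\mathcal T m};v),$$ $$\varrho^*(u_{\mathcal T m};z_{\mathcal T m},w):=j'(u_{\mathcal T m};w)-a'(u_{\mathcal T m};w,z_{\mathcal T m}).$$ Differentiability hypothesis: the function $\varphi(\sigma):=L(x_{\mathcal T m}+\sigma e)$ is three times continuously differentiable on $[0,1]$, with $\varphi'(\sigma)=L'(x_{\mathcal T m}+\sigma e;e)$. We write $L'''(x_{\mathcal T m}+\sigma e;e,e,e):=\varphi'''(\sigma)$. *)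

(* Defs.v *)
From Stdlib Require Import Reals.
Open Scope R_scope.

Record HilbertSpace := {
  hcar :> Type;
  vadd : hcar -> hcar -> hcar;
  vscal : R -> hcar -> hcar;
  vzero : hcar;
  vopp : hcar -> hcar;
  inner : hcar -> hcar -> R;
  vadd_assoc : forall x y z, vadd x (vadd y z) = vadd (vadd x y) z;
  vadd_comm : forall x y, vadd x y = vadd y x;
  vadd_0l : forall x, vadd vzero x = x;
  vadd_oppr : forall x, vadd x (vopp x) = vzero;
  vscal_addr : forall r x y, vscal r (vadd x y) = vadd (vscal r x) (vscal r y);
  vscal_addl : forall r s x, vscal (r + s) x = vadd (vscal r x) (vscal s x);
  vscal_mul : forall r s x, vscal (r * s) x = vscal r (vscal s x);
  vscal_1 : forall x, vscal 1 x = x;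
  inner_sym : forall x y, inner x y = inner y x;
  inner_addl : forall x y z, inner (vadd x y) z = inner x z + inner y z;
  inner_scall : forall r x y, inner (vscal r x) y = r * inner x y;
  inner_pos : forall x, 0 <= inner x x;
  inner_def : forall x, inner x x = 0 -> x = vzero;
  complete : forall s : nat -> hcar,
    (forall eps, 0 < eps -> exists N, forall n m, (N <= n)%nat -> (N <= m)%nat ->
        sqrt (inner (vadd (s n) (vopp (s m))) (vadd (s n) (vopp (s m)))) < eps) ->
    exists l, forall eps, 0 < eps -> exists N, forall n, (N <= n)%nat ->
        sqrt (inner (vadd (s n) (vopp l)) (vadd (s n) (vopp l))) < eps
}.

Arguments vadd {h}. Arguments vscal {h}. Arguments vzero {h}.
Arguments vopp {h}. Arguments inner {h}.

Definition vsub {V : HilbertSpace} (x y : V) : V := vadd x (vopp y).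
Definition vnorm {V : HilbertSpace} (x : V) : R := sqrt (inner x x).

Definition is_linear {V : HilbertSpace} (g : V -> R) : Prop :=
  (forall x y, g (vadd x y) = g x + g y) /\ (forall r x, g (vscal r x) = r * g x).

Definition in_dual {V : HilbertSpace} (g : V -> R) : Prop :=
  is_linear g /\ exists C, forall v, Rabs (g v) <= C * vnorm v.

Fixpoint lincomb {V : HilbertSpace} (n : nat) (c : nat -> R) (b : nat -> V) : V :=
  match n with
  | O => vzero
  | S k => vadd (lincomb k c b) (vscal (c k) (b k))
  end.

Definition fin_dim_subspace {V : HilbertSpace} (S : V -> Prop) : Prop :=
  S vzero /\
  (forall x y, S x -> S y -> S (vadd x y)) /\
  (forall r x, S x -> S (vscal r x)) /\
  exists (n : nat) (b : nat -> V), forall x, S x -> exists c, x = lincomb n c b.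

(** Linear functional on the subspace S (only values on S matter). *)
Definition is_linear_on {V : HilbertSpace} (S : V -> Prop) (g : V -> R) : Prop :=
  (forall x y, S x -> S y -> g (vadd x y) = g x + g y) /\
  (forall r x, S x -> g (vscal r x) = r * g x).

Definition gateaux {V : HilbertSpace} (F : V -> R) (u w : V) (d : R) : Prop :=
  derivable_pt_lim (fun eps => F (vadd u (vscal eps w))) 0 d.

Definition deriv_on01 (g g' : R -> R) : Prop :=
  forall s, 0 <= s <= 1 -> forall eps, 0 < eps -> exists delta, 0 < delta /\
    forall h, h <> 0 -> Rabs h < delta -> 0 <= s + h <= 1 ->
      Rabs ((g (s + h) - g s) / h - g' s) < eps.

Definition cont_on01 (g : R -> R) : Prop :=
  forall s, 0 <= s <= 1 -> forall eps, 0 < eps -> exists delta, 0 < delta /\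
    forall t, 0 <= t <= 1 -> Rabs (t - s) < delta -> Rabs (g t - g s) < eps.

Definition Lfun {V : HilbertSpace} (j : V -> R) (f : V -> R) (a ad : V -> V -> R)
  (u z : V) : R := j u + f z - a u z - ad u z.

Definition Lprime {V : HilbertSpace} (j' : V -> V -> R) (f : V -> R)
  (a ad : V -> V -> R) (a' ad' : V -> V -> V -> R) (u z w v : V) : R :=
  j' u w - a' u w z - ad' u w z + f v - a u v - ad u v.

Definition rho {V : HilbertSpace} (f : V -> R) (a : V -> V -> R) (uh v : V) : R :=
  f v - a uh v.
Definition rhostar {V : HilbertSpace} (j' : V -> V -> R) (a' : V -> V -> V -> R)
  (uh zh w : V) : R := j' uh w - a' uh w zh.

(* Main.v *)
From Coquelicot Require Import Coquelicot.
From Stdlib Require Import Reals Lra.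
Require Import Defs.
Open Scope R_scope.

Definition ext (F L Rt : R -> R) (x : R) : R :=
  if Rlt_dec x 0 then L x else if Rlt_dec 1 x then Rt x else F x.

Lemma Rabs_lt_inv h r : Rabs h < r -> - r < h < r.
Proof. intros H. destruct (Rabs_def2 _ _ H). lra. Qed.

Lemma glue_deriv F F' L L' Rt Rt' :
  deriv_on01 F F' -> (forall x, derivable_pt_lim L x (L' x)) ->
  (forall x, derivable_pt_lim Rt x (Rt' x)) ->
  L 0 = F 0 -> L' 0 = F' 0 -> Rt 1 = F 1 -> Rt' 1 = F' 1 ->
  forall x, derivable_pt_lim (ext F L Rt) x (ext F' L' Rt' x).
Proof.
  intros hF hL hR e0 e0' e1 e1' x eps He.
  destruct (Rtotal_order x 0) as [Hx|[Hx|Hx]].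
  - destruct (hL x eps He) as [d Hd].
    assert (Hp : 0 < Rmin d (-x)) by (apply Rmin_pos; [apply cond_pos|lra]).
    exists (mkposreal _ Hp). intros h Hh Hh2. simpl in Hh2.
    pose proof (Rmin_l d (-x)); pose proof (Rmin_r d (-x)).
    pose proof (Rabs_lt_inv _ _ Hh2).
    unfold ext; repeat destruct (Rlt_dec _ _); try lra.
    apply Hd; auto; lra.
  - subst x. destruct (hF 0 ltac:(lra) eps He) as [d1 [Hd1 H1]].
    destruct (hL 0 eps He) as [d2 Hd2].
    assert (Hp : 0 < Rmin (Rmin d1 d2) 1) by
      (apply Rmin_pos; [apply Rmin_pos; [lra|apply cond_pos]|lra]).
    exists (mkposreal _ Hp). intros h Hh Hh2. simpl in Hh2.
    pose proof (Rmin_l (Rmin d1 d2) 1); pose proof (Rmin_r (Rmin d1 d2) 1).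
    pose proof (Rmin_l d1 d2); pose proof (Rmin_r d1 d2).
    pose proof (Rabs_lt_inv _ _ Hh2).
    unfold ext; repeat destruct (Rlt_dec _ _); try lra.
    + rewrite <- e0, <- e0'. apply Hd2; auto; lra.
    + apply H1; auto; lra.
  - destruct (Rtotal_order x 1) as [Hx1|[Hx1|Hx1]].
    + destruct (hF x ltac:(lra) eps He) as [d1 [Hd1 H1]].
      assert (Hp : 0 < Rmin d1 (Rmin x (1 - x))) by
        (apply Rmin_pos; [lra|apply Rmin_pos; lra]).
      exists (mkposreal _ Hp). intros h Hh Hh2. simpl in Hh2.
      pose proof (Rmin_l d1 (Rmin x (1-x))); pose proof (Rmin_r d1 (Rmin x (1-x))).
      pose proof (Rmin_l x (1-x)); pose proof (Rmin_r x (1-x)).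
      pose proof (Rabs_lt_inv _ _ Hh2).
      unfold ext; repeat destruct (Rlt_dec _ _); try lra.
      apply H1; auto; lra.
    + subst x. destruct (hF 1 ltac:(lra) eps He) as [d1 [Hd1 H1]].
      destruct (hR 1 eps He) as [d2 Hd2].
      assert (Hp : 0 < Rmin (Rmin d1 d2) 1) by
        (apply Rmin_pos; [apply Rmin_pos; [lra|apply cond_pos]|lra]).
      exists (mkposreal _ Hp). intros h Hh Hh2. simpl in Hh2.
      pose proof (Rmin_l (Rmin d1 d2) 1); pose proof (Rmin_r (Rmin d1 d2) 1).
      pose proof (Rmin_l d1 d2); pose proof (Rmin_r d1 d2).
      pose proof (Rabs_lt_inv _ _ Hh2).
      unfold ext; repeat destruct (Rlt_dec _ _); try lra.
      * rewrite <- e1, <- e1'. apply Hd2; auto; lra.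
      * apply H1; auto; lra.
    + destruct (hR x eps He) as [d Hd].
      assert (Hp : 0 < Rmin d (x - 1)) by (apply Rmin_pos; [apply cond_pos|lra]).
      exists (mkposreal _ Hp). intros h Hh Hh2. simpl in Hh2.
      pose proof (Rmin_l d (x-1)); pose proof (Rmin_r d (x-1)).
      pose proof (Rabs_lt_inv _ _ Hh2).
      unfold ext; repeat destruct (Rlt_dec _ _); try lra.
      apply Hd; auto; lra.
Qed.

Definition clamp x := Rmax 0 (Rmin 1 x).

Lemma clamp_lip x y : Rabs (clamp y - clamp x) <= Rabs (y - x).
Proof.
  unfold clamp, Rmax, Rmin, Rabs.
  repeat destruct (Rle_dec _ _); repeat destruct (Rcase_abs _); lra.
Qed.

Lemma clamp_in x : 0 <= clamp x <= 1.
Proof. unfold clamp, Rmax, Rmin; repeat destruct (Rle_dec _ _); lra. Qed.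

Lemma clamp_cont g : cont_on01 g -> continuity (fun x => g (clamp x)).
Proof.
  intros hg x eps He.
  destruct (hg (clamp x) (clamp_in x) eps He) as [d [Hd H]].
  exists d; split; [lra|].
  intros y [_ Hy]. simpl in *. unfold R_dist in *.
  apply H. apply clamp_in. pose proof (clamp_lip x y). lra.
Qed.

Lemma ext_clamp g x : ext g (fun _ => g 0) (fun _ => g 1) x = g (clamp x).
Proof.
  unfold ext, clamp, Rmax, Rmin.
  repeat destruct (Rlt_dec _ _); repeat destruct (Rle_dec _ _); f_equal; lra.
Qed.
Lemma ext_at0 F L Rt : ext F L Rt 0 = F 0.
Proof. unfold ext; repeat destruct (Rlt_dec _ _); lra. Qed.
Lemma ext_at1 F L Rt : ext F L Rt 1 = F 1.
Proof. unfold ext; repeat destruct (Rlt_dec _ _); lra. Qed.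

Lemma trap P Q p2 p3 :
  deriv_on01 P Q -> deriv_on01 Q p2 -> deriv_on01 p2 p3 -> cont_on01 p3 ->
  forall pr : Riemann_integrable (fun s => s * (1 - s) * p3 s) 0 1,
  P 1 - P 0 = / 2 * (Q 0 + Q 1) - / 2 * RiemannInt pr.
Proof.
  intros hP hQ h2 h3 pr.
  set (E2 := ext p2 (fun s => p2 0 + p3 0 * s) (fun s => p2 1 + p3 1 * (s - 1))).
  set (E1 := ext Q (fun s => Q 0 + p2 0 * s + p3 0 * s ^ 2 / 2)
                   (fun s => Q 1 + p2 1 * (s - 1) + p3 1 * (s - 1) ^ 2 / 2)).
  set (E0 := ext P (fun s => P 0 + Q 0 * s + p2 0 * s ^ 2 / 2 + p3 0 * s ^ 3 / 6)
                   (fun s => P 1 + Q 1 * (s - 1) + p2 1 * (s - 1) ^ 2 / 2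
                             + p3 1 * (s - 1) ^ 3 / 6)).
  assert (D2 : forall x, derivable_pt_lim E2 x (p3 (clamp x))).
  { intro x. rewrite <- ext_clamp. apply glue_deriv; auto; try field;
    intro y; apply is_derive_Reals; auto_derive; auto; field. }
  assert (D1 : forall x, derivable_pt_lim E1 x (E2 x)).
  { intro x. unfold E1, E2. apply glue_deriv; auto; try field;
    intro y; apply is_derive_Reals; auto_derive; auto; field. }
  assert (D0 : forall x, derivable_pt_lim E0 x (E1 x)).
  { intro x. unfold E0, E1. apply glue_deriv; auto; try field;
    intro y; apply is_derive_Reals; auto_derive; auto; field. }
  set (G := fun s => s * (1 - s) * E2 s - (1 - 2 * s) * E1 s - 2 * E0 s).
  set (g := fun s => s * (1 - s) * p3 (clamp s)).
  assert (DG : forall x, derivable_pt_lim G x (g x)).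
  { intro x. apply is_derive_Reals.
    assert (Ha : is_derive (fun s => s * (1 - s)) x (1 - 2 * x)) by (auto_derive; auto; field).
    assert (Hb : is_derive (fun s => 1 - 2 * s) x (- 2)) by (auto_derive; auto; field).
    assert (D2' := proj2 (is_derive_Reals _ _ _) (D2 x)). assert (D1' := proj2 (is_derive_Reals _ _ _) (D1 x)). assert (D0' := proj2 (is_derive_Reals _ _ _) (D0 x)).
    pose proof (is_derive_minus _ _ x _ _
      (is_derive_minus _ _ x _ _ (is_derive_mult _ _ x _ _ Ha D2' Rmult_comm)
          (is_derive_mult _ _ x _ _ Hb D1' Rmult_comm))
      (is_derive_scal _ x 2 _ D0')) as K.
    unfold g. simpl in K. unfold plus, minus, mult, opp in K; simpl in K.
    replace (x * (1 - x) * p3 (clamp x)) with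
      ((1 - 2 * x) * E2 x + x * (1 - x) * p3 (clamp x) + - (-2 * E1 x + (1 - 2 * x) * E2 x) + - (2 * E1 x)) by ring.
    exact K. }
  assert (Dc : derivable G) by (intro x; exists (g x); apply DG).
  assert (Cc : continuity (derive G Dc)).
  { assert (E : forall x, derive G Dc x = g x).
    { intro x. unfold derive. destruct (Dc x) as [l Hl]. simpl.
      eapply uniqueness_limite; eauto. }
    intro x. eapply continuity_pt_ext. { intro y. symmetry. apply E. }
    unfold g. apply continuity_pt_mult.
    - apply derivable_continuous_pt. apply derivable_pt_mult.
      apply derivable_pt_id. apply derivable_pt_minus. apply derivable_pt_const. apply derivable_pt_id.
    - apply clamp_cont with (g := p3); auto. }
  set (C := mkC1 Cc).
  assert (pr' : Riemann_integrable (derive G Dc) 0 1).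
  { apply continuity_implies_RiemannInt; [lra|]. intros; apply Cc. }
  pose proof (FTC_Riemann C pr') as FT. simpl in FT.
  rewrite (RiemannInt_P18 pr pr') by (lra || (intros x Hx;
     unfold derive; destruct (Dc x) as [l Hl]; simpl;
     rewrite (uniqueness_limite _ _ _ _ Hl (DG x)); unfold g, clamp, Rmax, Rmin;
     repeat destruct (Rle_dec _ _); try lra; reflexivity)).
  rewrite FT. unfold G, E0, E1, E2. rewrite !ext_at0, !ext_at1. field.
Qed.

Section Vec.
Context {V : HilbertSpace}.
Lemma vadd_0r (x : V) : vadd x vzero = x.
Proof. rewrite vadd_comm. apply vadd_0l. Qed.
Lemma vadd_sub (x y : V) : vadd x (vsub y x) = y.
Proof. unfold vsub. rewrite (vadd_comm _ y), vadd_assoc, vadd_oppr. apply vadd_0l. Qed.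
Lemma vscal_0 (x : V) : vscal 0 x = vzero.
Proof.
  assert (H : vadd (vscal 0 x) (vscal 0 x) = vscal 0 x)
    by (rewrite <- vscal_addl; f_equal; ring).
  assert (H2 : vadd (vadd (vscal 0 x) (vscal 0 x)) (vopp (vscal 0 x)) = vzero)
    by (rewrite H; apply vadd_oppr).
  rewrite <- vadd_assoc, vadd_oppr, vadd_0r in H2. exact H2.
Qed.
Lemma lin_zero (g : V -> R) : is_linear g -> g vzero = 0.
Proof. intros [Ha _]. pose proof (Ha vzero vzero) as H. rewrite vadd_0l in H. lra. Qed.
Lemma lin_sub (g : V -> R) : is_linear g -> forall x y, g (vsub x y) = g x - g y.
Proof.
  intros Hg x y. pose proof (lin_zero g Hg) as Z. destruct Hg as [Ha _].
  pose proof (Ha y (vopp y)) as H. rewrite vadd_oppr, Z in H.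
  unfold vsub. rewrite Ha. lra.
Qed.
End Vec.

Theorem mainTheorem1
  (V : HilbertSpace) (VT : V -> Prop) (hVT : fin_dim_subspace VT)
  (a ad : V -> V -> R) (a' ad' : V -> V -> V -> R)
  (f : V -> R) (j : V -> R) (j' : V -> V -> R)
  (aT : V -> V -> R) (fT : V -> R)
  (ha_lin : forall u, is_linear (a u)) (had_lin : forall u, is_linear (ad u))
  (hf : in_dual f)
  (haT_lin : forall u, VT u -> is_linear_on VT (aT u))
  (hfT : is_linear_on VT fT)
  (ha' : forall u w v, gateaux (fun y => a y v) u w (a' u w v))
  (had' : forall u w v, gateaux (fun y => ad y v) u w (ad' u w v))
  (hj' : forall u w, gateaux j u w (j' u w))
  (ha'_lin : forall u, (forall v, is_linear (fun w => a' u w v)) /\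
                       (forall w, is_linear (a' u w)))
  (had'_lin : forall u, (forall v, is_linear (fun w => ad' u w v)) /\
                        (forall w, is_linear (ad' u w)))
  (hj'_lin : forall u, is_linear (j' u))
  (u z : V)
  (hu : forall v, a u v + ad u v = f v)
  (hz : forall w, a' u w z + ad' u w z = j' u w)
  (uTm zTm : V) (huTmT : VT uTm) (hzTmT : VT zTm)
  (huTm : forall v, VT v -> aT uTm v = fT v)
  (hzTm : forall w, VT w -> a' uTm w zTm = j' uTm w)
  (iT : V -> V) (hiT : forall v, VT (iT v))
  (phi2 phi3 : R -> R)
  (hphi1 : deriv_on01
     (fun s => Lfun j f a ad (vadd uTm (vscal s (vsub u uTm)))
                             (vadd zTm (vscal s (vsub z zTm))))
     (fun s => Lprime j' f a ad a' ad' (vadd uTm (vscal s (vsub u uTm)))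
                             (vadd zTm (vscal s (vsub z zTm)))
                             (vsub u uTm) (vsub z zTm)))
  (hphi2 : deriv_on01
     (fun s => Lprime j' f a ad a' ad' (vadd uTm (vscal s (vsub u uTm)))
                             (vadd zTm (vscal s (vsub z zTm)))
                             (vsub u uTm) (vsub z zTm)) phi2)
  (hphi3 : deriv_on01 phi2 phi3)
  (hphi3c : cont_on01 phi3)
  (pr : Riemann_integrable (fun s => s * (1 - s) * phi3 s) 0 1) :
  j u - j uTm =
    - ad uTm zTm
    + f zTm - fT zTm - a uTm zTm + aT uTm zTm
    + / 2 * (rho f a uTm (vsub z (iT z)) + rhostar j' a' uTm zTm (vsub u (iT u)))
    - / 2 * (ad uTm (vsub z zTm) + ad' uTm (vsub u uTm) zTm)
    - / 2 * rho f a uTm (vsub zTm (iT z))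
    - / 2 * RiemannInt pr.
Proof.
  pose proof (trap _ _ _ _ hphi1 hphi2 hphi3 hphi3c pr) as T.
  cbv beta in T. rewrite !vscal_1, !vadd_sub, !vscal_0, !vadd_0r in T.
  unfold Lfun, Lprime in T. unfold rho, rhostar.
  destruct hf as [hfl _].
  destruct (ha'_lin uTm) as [ha'1 _]. destruct (had'_lin uTm) as [had'1 _].
  pose proof (hu z). pose proof (hu (vsub z zTm)). pose proof (hz (vsub u uTm)).
  pose proof (huTm zTm hzTmT). pose proof (hzTm uTm huTmT). pose proof (hzTm (iT u) (hiT u)).
  rewrite !(lin_sub f hfl), !(lin_sub (a uTm) (ha_lin uTm)),
    !(lin_sub (j' uTm) (hj'_lin uTm)), !(lin_sub _ (ha'1 zTm)) in *.
  cbv beta in *.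
  lra.
Qed.
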